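(* Let $f \colon \mathbb{R}^n \to \mathbb{R}$ and $g \colon \mathbb{R}^n \to \mathbb{R}^m$ be continuously differentiable, let $X \subseteq \mathbb{R}^m$ be nonempty and closed, let $\rho>0$, and let $p^\rho(y)=\sum_{i=1}^n p_i^\rho(y_i)$ where each $p_i^\rho$ satisfies (P.1)–(P.3) below. Let $\varepsilon>0$ be such that there exists $t^*>0$ with $(p_i^\rho)'(t^* )>\varepsilon$ for every $i=1,\dots,n$. Let $\{\alpha_k\}\subset(0,\infty)$ and let $\{(x^k,y^k)\}\subset\mathbb{R}^n\times\mathbb{R}^n$, $\{z^k\}\subset\mathbb{R}^m$ be sequences with $$g(x^k)+z^k\in X,\qquad z^k\in B_\varepsilon(0),\qquad y^k\ge 0,$$ and assume there are $\lambda^k\in N^{\lim}_X(g(x^k)+z^k)$ and $\gamma^k\in N_{\ge0}(y^k)$ such that $$\begin{pmatrix} -\nabla f(x^k) - \alpha_k\, y^k\circ\partial(|x^k|) - g'(x^k)^T\lambda^k\\ -\nabla p^\rho(y^k) - \alpha_k|x^k| + \sum_{i\in I_0(y^k)}\gamma_i^k e_i\end{pmatrix} \in B_\varepsilon(0)\times B_\varepsilon(0)$$ (i.e. for some element of $y^k\circ\partial(|x^k|)$ the first block lies in $B_\varepsilon(0)$ and the second block lies in $B_\varepsilon(0)$). If $\alpha_k\to\infty$, then $|x^k|\circ y^k\to 0$.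
   Context: Conditions on each $p_i^\rho\colon\mathbb{R}\to\mathbb{R}$: (P.1) convex with a unique minimizer $s_i^\rho>0$; (P.2) $p_i^\rho(0)-p_i^\rho(s_i^\rho)=\rho$; (P.3) continuously differentiable. Notation: $B_\varepsilon(0)$ is the closed Euclidean ball of radius $\varepsilon$ around $0$ (in the appropriate dimension); $I_0(y)=\{i: y_i=0\}$; $|x|=(|x_1|,\dots,|x_n|)^T$; $\circ$ the componentwise product; $e_i$ the $i$-th unit vector; $g'(x)$ the Jacobian of $g$; $N^{\lim}_X$ the limiting (Mordukhovich) normal cone to $X$; $N_{\ge0}(y)=\{\gamma\in\mathbb{R}^n : \gamma^T(z-y)\le 0\ \forall z\ge 0\}$, i.e. $\gamma_i\le 0$ and $\gamma_iy_i=0$ for all $i$; $y\circ\partial(|x|)=\{y\circ s: s_i=\operatorname{sign}(x_i)\text{ if }x_i\neq0,\ s_i\in[-1,1]\text{ if }x_i=0\}$. *)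

(* Defs.v *)
From HB Require Import structures.
From mathcomp Require Import all_boot all_order all_algebra.
From mathcomp Require Import all_classical all_reals all_analysis.
Set Implicit Arguments. Unset Strict Implicit. Unset Printing Implicit Defensive.
Import Order.TTheory GRing.Theory Num.Theory.
Import numFieldNormedType.Exports.
Local Open Scope classical_set_scope.
Local Open Scope ring_scope.

Section Defs.
Variable R : realType.

Definition unitv (n : nat) (i : 'I_n) : 'rV[R]_n := delta_mx 0 i.

Definition dotv (n : nat) (u v : 'rV[R]_n) : R := \sum_(i < n) u 0 i * v 0 i.
Definition enorm (n : nat) (v : 'rV[R]_n) : R := Num.sqrt (dotv v v).

Definition in_ball0 (n : nat) (eps : R) (v : 'rV[R]_n) : Prop := enorm v <= eps.

Definition C1 (n m : nat) (F : 'rV[R]_n -> 'rV[R]_m) : Prop :=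
  (forall x, differentiable F x) /\
  (forall j : 'I_n, continuous (fun x => 'd F x (unitv j))).

Definition C1_scalar (n : nat) (F : 'rV[R]_n -> R) : Prop :=
  (forall x, differentiable F x) /\
  (forall j : 'I_n, continuous (fun x => 'd F x (unitv j))).

Definition grad (n : nat) (F : 'rV[R]_n -> R) (x : 'rV[R]_n) : 'rV[R]_n :=
  \row_j ('d F x (unitv j)).

Definition jacT_mul (n m : nat) (G : 'rV[R]_n -> 'rV[R]_m) (x : 'rV[R]_n)
  (lam : 'rV[R]_m) : 'rV[R]_n :=
  \row_j \sum_(i < m) ('d G x (unitv j)) 0 i * lam 0 i.

Definition frechet_normal (m : nat) (X : set 'rV[R]_m) (xb v : 'rV[R]_m) : Prop :=
  X xb /\
  forall e : R, 0 < e -> exists2 d : R, 0 < d &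
    forall x', X x' -> enorm (x' - xb) <= d -> dotv v (x' - xb) <= e * enorm (x' - xb).

Definition lim_normal (m : nat) (X : set 'rV[R]_m) (xb v : 'rV[R]_m) : Prop :=
  exists (xs vs : nat -> 'rV[R]_m),
    (forall k, X (xs k)) /\ xs @ \oo --> xb /\ vs @ \oo --> v /\
    (forall k, frechet_normal X (xs k) (vs k)).

Definition normal_nonneg (n : nat) (y gam : 'rV[R]_n) : Prop :=
  forall z : 'rV[R]_n, (forall i, 0 <= z 0 i) -> dotv gam (z - y) <= 0.

(* s is a selection of the componentwise subdifferential of |.| at x,
   so that y o s is an element of y o d(|x|) *)
Definition abs_subgrad (n : nat) (x s : 'rV[R]_n) : Prop :=
  forall i, (x 0 i != 0 -> s 0 i = Num.sg (x 0 i)) /\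
            (x 0 i = 0 -> -1 <= s 0 i <= 1).

Definition convex_fun (p : R -> R) : Prop :=
  forall a b t : R, 0 <= t -> t <= 1 ->
    p (t * a + (1 - t) * b) <= t * p a + (1 - t) * p b.

Definition penalty_cond (rho : R) (p : R -> R) : Prop :=
  convex_fun p /\
  (exists s : R, 0 < s /\ (forall t, p s <= p t) /\
     (forall t, (forall u, p t <= p u) -> t = s) /\
     p 0 - p s = rho) /\
  (forall t, derivable p t 1) /\ continuous (derive1 p).

End Defs.

(* Main.v *)
Require Import Defs.
From HB Require Import structures.
From mathcomp Require Import all_boot all_order all_algebra.
From mathcomp Require Import all_classical all_reals all_analysis.
From mathcomp Require Import ring lra.
Import Order.TTheory GRing.Theory Num.Theory.
Import numFieldNormedType.Exports.
Local Open Scope classical_set_scope.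
Local Open Scope ring_scope.

Lemma der_cvg (R : realType) (p : R -> R) a : derivable p a 1 ->
  cvg ((fun h : R => h^-1 *: (p (h + a) - p a)) @ 0^').
Proof.
move=> d.
have -> : (fun h : R => h^-1 *: (p (h + a) - p a)) =
   (fun h => h^-1 *: ((p \o shift a) (h *: 1) - p a)).
  by apply/funext => h /=; rewrite [h *: 1]mulr1.
exact: d.
Qed.

Lemma slope_l (R : realType) (p : R -> R) a b : convex_fun p -> derivable p a 1 ->
  a < b -> derive1 p a <= (p b - p a) / (b - a).
Proof.
move=> cv d ab.
have c := @der_cvg R p a d.
rewrite /derive1 cvg_at_rightE //.
apply: limr_le.
  move/cvg_ex: c => [l Hl]; apply/cvg_ex; exists l.
  move=> A /Hl /nbhs_ballP [_ /posnumP[e] xe_A].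
  by exists e%:num => //= y xe_y /gt_eqF/negbT/xe_A; exact.
near=> h.
have h0 : 0 < h by near: h; exact: nbhs_right_gt.
have hb : h < b - a by near: h; apply: nbhs_right_lt; rewrite subr_gt0.
have ba : 0 < b - a by rewrite subr_gt0.
set t := h / (b - a).
have t0 : 0 <= t by rewrite divr_ge0 // ltW.
have t1 : t <= 1 by rewrite ler_pdivrMr // mul1r ltW.
have := cv b a t t0 t1.
have -> : t * b + (1 - t) * a = h + a.
  rewrite /t; field; by rewrite gt_eqF.
move=> H.
have e1 : t * (p b - p a) = h * ((p b - p a) / (b - a)) by rewrite /t; field; rewrite gt_eqF.
have key : p (h + a) - p a <= h * ((p b - p a) / (b - a)).
  rewrite -e1; move: H; rewrite mulrBl mulrBr mul1r; lra.
rewrite -[_ *: _]/(h^-1 * _) -(ler_pM2l h0) mulrA mulfV ?gt_eqF // mul1r.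
exact: key.
Unshelve. all: by end_near.
Qed.

Lemma slope_r (R : realType) (p : R -> R) a b : convex_fun p -> derivable p b 1 ->
  a < b -> (p b - p a) / (b - a) <= derive1 p b.
Proof.
move=> cv d ab.
have c := @der_cvg R p b d.
rewrite /derive1 cvg_at_leftE //.
apply: limr_ge.
  move/cvg_ex: c => [l Hl]; apply/cvg_ex; exists l.
  move=> A /Hl /nbhs_ballP [_ /posnumP[e] xe_A].
  by exists e%:num => //= y xe_y /lt_eqF/negbT/xe_A; exact.
near=> h.
have h0 : h < 0 by near: h; exact: nbhs_left_lt.
have hb : a - b < h by near: h; apply: nbhs_left_gt; rewrite subr_lt0.
have ba : 0 < b - a by rewrite subr_gt0.
set t := - h / (b - a).
have t0 : 0 <= t by rewrite divr_ge0 // ltW // oppr_gt0.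
have t1 : t <= 1 by rewrite ler_pdivrMr // mul1r; lra.
have := cv a b t t0 t1.
have -> : t * a + (1 - t) * b = h + b.
  rewrite /t; field; by rewrite gt_eqF.
move=> H.
have e1 : t * (p a - p b) = h * ((p b - p a) / (b - a)) by rewrite /t; field; rewrite gt_eqF.
have key : p (h + b) - p b <= h * ((p b - p a) / (b - a)).
  rewrite -e1; move: H; rewrite mulrBl mulrBr mul1r; lra.
rewrite -[_ *: _]/(h^-1 * _) -(ler_nM2l h0) mulrA mulfV ?lt_eqF // mul1r.
exact: key.
Unshelve. all: by end_near.
Qed.

Lemma der_mono (R : realType) (p : R -> R) a b : convex_fun p -> (forall t, derivable p t 1) ->
  a <= b -> derive1 p a <= derive1 p b.
Proof.
move=> cv d; rewrite le_eqVlt => /orP [/eqP -> //| ab].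
exact: (le_trans (@slope_l R p a b cv (d a) ab) (@slope_r R p a b cv (d b) ab)).
Qed.

Lemma entry_le_enorm (R : realType) n (v : 'rV[R]_n) i : `|v 0 i| <= enorm v.
Proof.
rewrite /enorm /dotv -sqrtr_sqr ler_sqrt; last first.
  by apply: sumr_ge0 => j _; rewrite -expr2 sqr_ge0.
rewrite (bigD1 i) //= expr2 lerDl.
by apply: sumr_ge0 => j _; rewrite -expr2 sqr_ge0.
Qed.

Lemma le_sum_term (R : realType) n (F : 'I_n -> R) i :
  (forall j, 0 <= F j) -> F i <= \sum_j F j.
Proof.
move=> F0; rewrite (bigD1 i) //= lerDl.
by apply: sumr_ge0 => j _.
Qed.

Lemma entry_bound (R : realType) n (p : 'I_n -> R -> R) rho eps ts (a : R)
  (xv yv gam : 'rV[R]_n) i :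
  (forall i, penalty_cond rho (p i)) -> 0 < ts -> (forall i, eps < derive1 (p i) ts) ->
  0 < a -> 0 <= yv 0 i ->
  in_ball0 eps (\row_i (- derive1 (p i) (yv 0 i) - a * `|xv 0 i|
                 + (if yv 0 i == 0 then gam 0 i else 0))) ->
  `|xv 0 i| * yv 0 i <= ts * `|eps - derive1 (p i) 0| / a.
Proof.
move=> pc ts0 hts a0 y0 hb.
have rhs0 : 0 <= ts * `|eps - derive1 (p i) 0| / a.
  by rewrite divr_ge0 ?mulr_ge0 // ltW.
have [->|yn0] := eqVneq (yv 0 i) 0; first by rewrite mulr0.
have hy : 0 < yv 0 i by rewrite lt_def yn0.
have := le_trans (@entry_le_enorm R n _ i) hb.
rewrite mxE (negbTE yn0) addr0 => H.
have [cv [_ [dv _]]] := pc i.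
have H2 : a * `|xv 0 i| <= eps - derive1 (p i) (yv 0 i).
  move: H; rewrite ler_norml => /andP [H _]; lra.
have Ha : 0 <= a * `|xv 0 i| by rewrite mulr_ge0 // ltW.
have yts : yv 0 i < ts.
  rewrite ltNge; apply/negP => tsy.
  have := @der_mono R (p i) ts (yv 0 i) cv dv tsy.
  have := hts i; lra.
have d0 := @der_mono R (p i) 0 (yv 0 i) cv dv y0.
have H3 : `|xv 0 i| <= `|eps - derive1 (p i) 0| / a.
  rewrite ler_pdivlMr // mulrC.
  apply: (le_trans H2); rewrite (le_trans _ (ler_norm _)) //; lra.
apply: (@le_trans _ _ (`|xv 0 i| * ts)).
  by rewrite ler_wpM2l // ltW.
rewrite [ts * _]mulrC mulrAC.
by rewrite ler_wpM2r // ltW.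
Qed.

Theorem mainTheorem5 (R : realType) (n m : nat)
  (f : 'rV[R]_n -> R) (g : 'rV[R]_n -> 'rV[R]_m) (X : set 'rV[R]_m)
  (rho : R) (p : 'I_n -> R -> R) (eps : R)
  (alpha : nat -> R) (x y : nat -> 'rV[R]_n) (z : nat -> 'rV[R]_m) :
  C1_scalar f -> C1 g ->
  X !=set0 -> closed X ->
  0 < rho ->
  (forall i, penalty_cond rho (p i)) ->
  (exists2 ts : R, 0 < ts & forall i, eps < derive1 (p i) ts) ->
  (forall k, 0 < alpha k) ->
  (forall k,
     X (g (x k) + z k) /\ in_ball0 eps (z k) /\ (forall i, 0 <= y k 0 i) /\
     exists (lam : 'rV[R]_m) (gam : 'rV[R]_n) (s : 'rV[R]_n),
       lim_normal X (g (x k) + z k) lam /\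
       normal_nonneg (y k) gam /\
       abs_subgrad (x k) s /\
       in_ball0 eps (\row_j (- grad f (x k) 0 j - alpha k * (y k 0 j * s 0 j)
                              - jacT_mul g (x k) lam 0 j)) /\
       in_ball0 eps (\row_i (- derive1 (p i) (y k 0 i) - alpha k * `|x k 0 i|
                              + (if y k 0 i == 0 then gam 0 i else 0)))) ->
  alpha @ \oo --> +oo ->
  (fun k => \row_i (`|x k 0 i| * y k 0 i)) @ \oo --> (0 : 'rV[R]_n).
Proof.
move=> _ _ _ _ _ pc [ts ts0 hts] a0 H ainf.
set B := ts * \sum_j `|eps - derive1 (p j) 0|.
have B0 : 0 <= B by apply: mulr_ge0; [exact: ltW | apply: sumr_ge0 => j _].
have bnd : forall k, `|\row_i (`|x k 0 i| * y k 0 i)| <= B / alpha k.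
  move=> k; have [_ [_ [y0 [lam [gam [s [_ [_ [_ [_ hb]]]]]]]]]] := H k.
  rewrite -[`|_|]/(mx_norm _) mx_normrE.
  elim/big_ind: _ => //.
  - by rewrite divr_ge0 // ltW.
  - by move=> u v hu hv; rewrite ge_max hu hv.
  move=> [i0 j] _ /=; rewrite (ord1 i0) mxE.
  have EB := @entry_bound R n p rho eps ts (alpha k) (x k) (y k) gam j pc ts0 hts (a0 k) (y0 j) hb.
  rewrite ger0_norm ?mulr_ge0 //; apply: (le_trans EB).
  rewrite ler_pM2r ?invr_gt0 // /B ler_pM2l //.
  exact: (@le_sum_term R n (fun j => `|eps - derive1 (p j) 0|) j).
apply/(@cvgrPdist_le R _ nat \oo _) => e e0.
have hA : \forall k \near \oo, B / e + 1 <= alpha k by move/cvgryPge: ainf; apply.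
near=> k.
have hk : B / e + 1 <= alpha k by near: k.
rewrite sub0r normrN; apply: le_trans (bnd k) _.
have ak := a0 k.
rewrite ler_pdivrMr //.
have : B / e < alpha k by lra.
rewrite ltr_pdivrMr // => h; rewrite mulrC; exact: ltW.
Unshelve. all: by end_near.
Qed.
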